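(* Let $\mathbb{F}$ be the finite field of order $q$ and let $M_1$ and $M_2$ be orthogonal sudoku solutions of order $q^2$ generated by sudoku flags $Z_1=(g_1,V_1)$ and $Z_2=(g_2,V_2)$, respectively. If the composite solution $N_{12}$ is a sudoku solution, then it is a linear sudoku solution generated by the two-dimensional subspace $g_{12}=V_1\cap V_2$, i.e. for each symbol the set of locations of $N_{12}$ housing that symbol is a coset of $V_1\cap V_2$.
   Context: Locations of a sudoku solution of order $q^2$ are identified with vectors $(x_1,x_2,x_3,x_4)\in\mathbb{F}^4$: $x_1$ is the large row, $x_2$ the row within the large row, $x_3$ the large column, $x_4$ the column within the large column; rows, columns and subsquares are the sets of locations with fixed $(x_1,x_2)$, $(x_3,x_4)$, $(x_1,x_3)$ respectively. A sudoku solution of order $q^2$ assigns symbols $\{0,\dots,q^2-1\}$ to locations so that each symbol occurs exactly once in every row, column and subsquare; two are orthogonal if upon superimposition each ordered pair of symbols occurs exactly once. Each symbol $x=b_qq+b_1$ ($b_q,b_1\in\{0,\dots,q-1\}$) has radix digit $b_q$. The composite solution $N_{12}$ of $M_1,M_2$ assigns to each location the symbol $q\,r_1+r_2$, where $r_i$ is the radix digit of the symbol of $M_i$ at that location. A flag is a pair $(g,V)$ of subspaces of $\mathbb{F}^4$ with $\dim g=2$, $\dim V=3$, $g\subset V$; it is a sudoku flag if every coset of $g$ meets every row, column and subsquare in exactly one location. A sudoku solution $M$ generated by a sudoku flag $(g,V)$ is a sudoku solution of order $q^2$ in which each coset of $g$ is exactly the set of locations of one symbol and each coset of $V$ is exactly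 the set of locations whose symbols have one given radix digit. *)

(* Defs.v *)
From HB Require Import structures.
From mathcomp Require Import all_boot all_order all_algebra all_field.
Set Implicit Arguments. Unset Strict Implicit. Unset Printing Implicit Defensive.
Import GRing.Theory.
Local Open Scope ring_scope.

(* Locations are vectors (x1,x2,x3,x4) in F^4, encoded as row vectors 'rV[F]_4;
   coordinate x_(i+1) is  x 0 (ci).  *)
Definition c0 : 'I_4 := @Ordinal 4 0 isT.
Definition c1 : 'I_4 := @Ordinal 4 1 isT.
Definition c2 : 'I_4 := @Ordinal 4 2 isT.
Definition c3 : 'I_4 := @Ordinal 4 3 isT.

Section Sudoku.
Variable F : finFieldType.

Notation loc := 'rV[F]_4.
Definition ord_q : nat := #|F|.

Definition row_set (a b : F) : {set loc} := [set x : loc | (x 0 c0 == a) && (x 0 c1 == b)].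
Definition col_set (a b : F) : {set loc} := [set x : loc | (x 0 c2 == a) && (x 0 c3 == b)].
Definition box_set (a b : F) : {set loc} := [set x : loc | (x 0 c0 == a) && (x 0 c2 == b)].

Definition coset_of (U : {vspace loc}) (a : loc) : {set loc} :=
  [set x : loc | (x - a) \in U].

Definition sym_set (M : loc -> nat) (s : nat) : {set loc} := [set x : loc | M x == s].

Definition sudoku_solution (M : loc -> nat) : Prop :=
  (forall x, (M x < ord_q ^ 2)%N) /\
  forall s, (s < ord_q ^ 2)%N -> forall a b : F,
    [/\ #|sym_set M s :&: row_set a b| = 1%N,
        #|sym_set M s :&: col_set a b| = 1%N &
        #|sym_set M s :&: box_set a b| = 1%N].

Definition orthogonal_sol (M1 M2 : loc -> nat) : Prop :=
  forall s t, (s < ord_q ^ 2)%N -> (t < ord_q ^ 2)%N ->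
    #|sym_set M1 s :&: sym_set M2 t| = 1%N.

(* radix digit b_q of x = b_q q + b_1 *)
Definition radix (s : nat) : nat := (s %/ ord_q)%N.

Definition sudoku_flag (g V : {vspace loc}) : Prop :=
  [/\ \dim g = 2%N, \dim V = 3%N, (g <= V)%VS &
      forall (c : loc) (a b : F),
        [/\ #|coset_of g c :&: row_set a b| = 1%N,
            #|coset_of g c :&: col_set a b| = 1%N &
            #|coset_of g c :&: box_set a b| = 1%N]].

Definition generated_by_flag (M : loc -> nat) (g V : {vspace loc}) : Prop :=
  [/\ sudoku_flag g V, sudoku_solution M,
      (forall c : loc, exists s, coset_of g c = sym_set M s) &
      (forall c : loc, exists d, coset_of V c = [set x : loc | radix (M x) == d])].

Definition composite (M1 M2 : loc -> nat) : loc -> nat :=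
  fun x => (ord_q * radix (M1 x) + radix (M2 x))%N.

End Sudoku.

(* Main.v *)
Require Import Defs.
From HB Require Import structures.
From mathcomp Require Import all_boot all_order all_algebra all_field.
Local Open Scope ring_scope.
Import GRing.Theory.

Lemma coset_card (F : finFieldType) (U : {vspace 'rV[F]_4}) c :
  #|coset_of U c| = (#|F| ^ \dim U)%N.
Proof.
rewrite -(card_vspace U).
have -> : coset_of U c = (fun x => x + c) @: [set x | x \in U].
  apply/setP => x; rewrite inE; apply/idP/imsetP.
    by move=> h; exists (x - c); rewrite ?inE // subrK.
  by move=> [y]; rewrite inE => hy ->; rewrite addrK.
rewrite card_imset; last by move=> x y /addIr.
by apply: eq_card => x; rewrite inE.
Qed.

Lemma radix_lvl (F : finFieldType) (M : 'rV[F]_4 -> nat) g V y x :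
  generated_by_flag M g V ->
  ((x - y) \in V) = (radix F (M x) == radix F (M y)).
Proof.
case=> _ _ _ /(_ y) [d hd].
have : y \in coset_of V y by rewrite inE subrr mem0v.
rewrite hd inE => /eqP hy.
by move/setP: hd => /(_ x); rewrite !inE hy.
Qed.

Lemma sym_nonempty (F : finFieldType) (N : 'rV[F]_4 -> nat) s :
  sudoku_solution N -> (s < ord_q F ^ 2)%N -> exists y, N y = s.
Proof.
case=> _ /(_ s) h /h /(_ 0 0) [+ _ _].
move/eqP/cards1P => [y hy].
have : y \in [set y] by rewrite inE.
by rewrite -hy !inE => /andP [/eqP <- _]; exists y.
Qed.

Lemma sym_card (F : finFieldType) (N : 'rV[F]_4 -> nat) s :
  sudoku_solution N -> (s < ord_q F ^ 2)%N -> #|sym_set N s| = (ord_q F ^ 2)%N.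
Proof.
case=> _ /(_ s) h /h hs.
pose f (x : 'rV[F]_4) := (x 0 c0, x 0 c1).
have inj : {in sym_set N s &, injective f}.
  move=> x y; rewrite !inE => hx hy [e0 e1].
  have [+ _ _] := hs (x 0 c0) (x 0 c1).
  move/eqP/cards1P => [z hz].
  have : x \in sym_set N s :&: row_set (x 0 c0) (x 0 c1) by rewrite !inE hx !eqxx.
  have : y \in sym_set N s :&: row_set (x 0 c0) (x 0 c1) by rewrite !inE hy e0 e1 !eqxx.
  by rewrite hz !inE => /eqP -> /eqP ->.
rewrite -(card_in_imset inj).
have -> : f @: sym_set N s = setT.
  apply/setP => -[a b]; rewrite in_setT; apply/imsetP.
  have [+ _ _] := hs a b.
  move/eqP/cards1P => [z hz].
  have : z \in [set z] by rewrite inE.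
  rewrite -hz !inE => /andP [hz1 /andP [/eqP <- /eqP <-]].
  by exists z; rewrite ?inE.
by rewrite cardsT card_prod expnS expn1.
Qed.

Theorem proposition4p7 (F : finFieldType) (M1 M2 : 'rV[F]_4 -> nat)
  (g1 V1 g2 V2 : {vspace 'rV[F]_4}) :
  generated_by_flag M1 g1 V1 ->
  generated_by_flag M2 g2 V2 ->
  orthogonal_sol M1 M2 ->
  sudoku_solution (composite M1 M2) ->
  \dim (V1 :&: V2)%VS = 2%N /\
  (forall s, (s < ord_q F ^ 2)%N ->
     exists c : 'rV[F]_4, sym_set (composite M1 M2) s = coset_of (V1 :&: V2)%VS c).
Proof.
move=> h1 h2 _ hN.
have qpos : (0 < ord_q F)%N by rewrite /ord_q; apply/card_gt0P; exists 0.
have r2lt : forall x, (radix F (M2 x) < ord_q F)%N.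
  move=> x; case: h2 => _ [+ _ _ _] => /(_ x).
  by rewrite /radix ltn_divLR // expnS expn1.
have key : forall s, (s < ord_q F ^ 2)%N -> exists c : 'rV[F]_4,
    sym_set (composite M1 M2) s = coset_of (V1 :&: V2)%VS c.
  move=> s hs; have [y hy] := sym_nonempty _ _ s hN hs.
  exists y; apply/setP => x; rewrite !inE memv_cap (radix_lvl _ _ _ _ y x h1) (radix_lvl _ _ _ _ y x h2).
  rewrite -hy /composite.
  apply/eqP/andP => [e | [/eqP -> /eqP -> //]].
  have := congr1 (fun n => divn n (ord_q F)) e.
  have := congr1 (fun n => modn n (ord_q F)) e.
  rewrite /= !(mulnC (ord_q F)) !modnMDl !divnMDl // !modn_small // !divn_small // !addn0.
  by move=> -> ->.
split => //.
have q2pos : (0 < ord_q F ^ 2)%N by rewrite expn_gt0 qpos.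
have [c hc] := key 0%N q2pos.
have := sym_card _ _ 0 hN q2pos.
have q2 : (1 < ord_q F)%N by rewrite /ord_q; apply: finRing_gt1.
rewrite hc coset_card => /eqP; rewrite eqn_exp2l // => /eqP. done.
Qed.
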